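(* Suppose that the condition $V \succ 0,W \succ 0$ is relaxed to $V \succeq 0,W \succeq 0$. Assume that $f$ is a bijection for the given $V \succeq 0,W \succeq 0$. Consider any tuples $(\lambda ,S_k^\lambda ,F_k^\lambda ,P_k^\lambda )_{k = 0}^{N - 1}$ such that $\lambda>0$ and $C(\{ S_k^\lambda \} _{k = 0}^{N - 1} ) = \gamma$. Then, the corresponding $\{(S_k^\lambda,F_k^\lambda)\}_{k=0}^{N-1}$ is an optimal solution of the constrained LQG (covariance selection) problem.
   Context: Consider the stochastic LTI system $x(k+1)=Ax(k)+Bu(k)+w(k)$ with $x(k)\in\mathbb R^n$, $u(k)\in\mathbb R^m$, $x(0)\sim\mathcal N(z,V)$, $w(k)\sim\mathcal N(0,W)$ mutually independent, and linear feedback $u(k)=F_kx(k)$, $k\in\{0,\dots,N-1\}$. With $S_k=\mathbb E([x(k);u(k)][x(k);u(k)]^T)$, the constrained LQG (covariance selection) problem is: minimize $J_p(\{S_k\})=\mathrm{Tr}\big(Q_f([A\ B]S_{N-1}[A\ B]^T+W)\big)+\sum_{k=0}^{N-1}\mathrm{Tr}(\mathrm{diag}(Q_k,R_k)S_k)$ over $\{S_k,F_k\}$ subject to $S_k=\Phi(F_k,S_{k-1})$ ($k=1,\dots,N-1$), $S_0=[I_n;F_0](V+zz^T)[I_n;F_0]^T$, and $C(\{S_k\})\le\gamma$, where $C(\{S_k\})=\mathrm{Tr}\big(\tilde Q_f([A\ B]S_{N-1}[A\ B]^T+W)\big)+\sum_{k=0}^{N-1}\mathrm{Tr}(\mathrm{diag}(\tilde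 Q_k,\tilde R_k)S_k)$ and $\Phi(F,S)=[I_n;F]([A\ B]S[A\ B]^T+W)[I_n;F]^T$. Standing assumptions (other than the relaxed noise condition): $Q_f,\tilde Q_f,Q_k,\tilde Q_k\succeq0$, $R_k+\lambda\tilde R_k\succ0$ for all $k$, $\lambda>0$; strict feasibility of the inequality constraint; $C(\{S_k^0\})>\gamma$. For $\lambda\ge0$, $X_N^\lambda=Q_f+\lambda\tilde Q_f$, $X_k^\lambda=A^TX_{k+1}^\lambda A-A^TX_{k+1}^\lambda B(R_k+\lambda\tilde R_k+B^TX_{k+1}^\lambda B)^{-1}B^TX_{k+1}^\lambda A+Q_k+\lambda\tilde Q_k$, $F_k^\lambda=-(R_k+\lambda\tilde R_k+B^TX_{k+1}^\lambda B)^{-1}B^TX_{k+1}^\lambda A$, $S_0^\lambda=[I;F_0^\lambda](V+zz^T)[I;F_0^\lambda]^T$, $S_k^\lambda=\Phi(F_k^\lambda,S_{k-1}^\lambda)$, $P_k^\lambda=\begin{bmatrix}Q_k+\lambda\tilde Q_k+A^TX_{k+1}^\lambda A & A^TX_{k+1}^\lambda B\\ B^TX_{k+1}^\lambda A & R_k+\lambda\tilde R_k+B^TX_{k+1}^\lambda B\end{bmatrix}$, and $f(\lambda)=C(\{S_k^\lambda\}_{k=0}^{N-1})-\gamma$ (which depends on $V,W$). When $V\succ0,W\succ0$ it was shown that such tuples are exactly the KKT points and are optimal; with only $V\succeq0,W\succeq0$ these tuples still satisfy the KKT conditions but need not be the unique KKT points. *)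

(* Defs.v *)
From HB Require Import structures.
From mathcomp Require Import all_boot all_order all_algebra.
From mathcomp Require Import reals.
Set Implicit Arguments. Unset Strict Implicit. Unset Printing Implicit Defensive.
Import Order.TTheory GRing.Theory Num.Theory.
Local Open Scope ring_scope.

Section LQG.
Variable R : realType.

Definition psd (p : nat) (M : 'M[R]_p) : Prop :=
  M^T = M /\ forall v : 'cV[R]_p, 0 <= (v^T *m M *m v) 0 0.
Definition pd (p : nat) (M : 'M[R]_p) : Prop :=
  M^T = M /\ forall v : 'cV[R]_p, v != 0 -> 0 < (v^T *m M *m v) 0 0.

Variables (n m : nat).

Definition IF (F : 'M[R]_(m, n)) : 'M[R]_(n + m, n) := col_mx 1%:M F.

Definition Phi (A : 'M[R]_n) (B : 'M[R]_(n, m)) (W : 'M[R]_n)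
  (F : 'M[R]_(m, n)) (S : 'M[R]_(n + m)) : 'M[R]_(n + m) :=
  IF F *m (row_mx A B *m S *m (row_mx A B)^T + W) *m (IF F)^T.

Definition S0of (V : 'M[R]_n) (z : 'cV[R]_n) (F : 'M[R]_(m, n)) : 'M[R]_(n + m) :=
  IF F *m (V + z *m z^T) *m (IF F)^T.

(* Generic quadratic cost:
   Tr(Qf([A B] S_{N-1} [A B]^T + W)) + sum_{k<N} Tr(diag(Q_k,R_k) S_k).
   Used both for J_p and for C. *)
Definition cost (N : nat) (A : 'M[R]_n) (B : 'M[R]_(n, m)) (W : 'M[R]_n)
  (Qf : 'M[R]_n) (Q : nat -> 'M[R]_n) (Rk : nat -> 'M[R]_m)
  (S : nat -> 'M[R]_(n + m)) : R :=
  \tr (Qf *m (row_mx A B *m S N.-1 *m (row_mx A B)^T + W))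
  + \sum_(k < N) \tr (block_mx (Q k) 0 0 (Rk k) *m S k).

Definition dynamics (N : nat) (A : 'M[R]_n) (B : 'M[R]_(n, m)) (W V : 'M[R]_n)
  (z : 'cV[R]_n) (S : nat -> 'M[R]_(n + m)) (F : nat -> 'M[R]_(m, n)) : Prop :=
  S 0%N = S0of V z (F 0%N) /\
  forall k : nat, (1 <= k <= N.-1)%N -> S k = Phi A B W (F k) (S k.-1).

Definition feasible (N : nat) A B W V z (Qtf : 'M[R]_n) (Qt : nat -> 'M[R]_n)
  (Rt : nat -> 'M[R]_m) (gamma : R) S F : Prop :=
  dynamics N A B W V z S F /\ cost N A B W Qtf Qt Rt S <= gamma.

Definition optimal (N : nat) A B W V z (Qf Qtf : 'M[R]_n) (Q Qt : nat -> 'M[R]_n)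
  (Rk Rt : nat -> 'M[R]_m) (gamma : R) S F : Prop :=
  feasible N A B W V z Qtf Qt Rt gamma S F /\
  forall S' F', feasible N A B W V z Qtf Qt Rt gamma S' F' ->
    cost N A B W Qf Q Rk S <= cost N A B W Qf Q Rk S'.

Section Lambda.
Variables (N : nat) (A : 'M[R]_n) (B : 'M[R]_(n, m)) (W V : 'M[R]_n)
  (z : 'cV[R]_n) (Qf Qtf : 'M[R]_n) (Q Qt : nat -> 'M[R]_n)
  (Rk Rt : nat -> 'M[R]_m) (lam : R).

(* Xb j = X_{N-j}^lambda (backward Riccati recursion). *)
Fixpoint Xb (j : nat) : 'M[R]_n :=
  match j with
  | 0%N => Qf + lam *: Qtf
  | j'.+1 =>
      let X := Xb j' in
      let k := (N - j'.+1)%N in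
      A^T *m X *m A
      - A^T *m X *m B *m invmx (Rk k + lam *: Rt k + B^T *m X *m B) *m B^T *m X *m A
      + Q k + lam *: Qt k
  end.

Definition Xlam (k : nat) : 'M[R]_n := Xb (N - k).

Definition Flam (k : nat) : 'M[R]_(m, n) :=
  - (invmx (Rk k + lam *: Rt k + B^T *m Xlam k.+1 *m B) *m B^T *m Xlam k.+1 *m A).

Fixpoint Slam (k : nat) : 'M[R]_(n + m) :=
  match k with
  | 0%N => S0of V z (Flam 0%N)
  | k'.+1 => Phi A B W (Flam k) (Slam k')
  end.

Definition flam (gamma : R) : R := cost N A B W Qtf Qt Rt Slam - gamma.

End Lambda.
End LQG.

(* Main.v *)
Require Import Defs.
From HB Require Import structures.
From mathcomp Require Import all_boot all_order all_algebra.
From mathcomp Require Import reals.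
From mathcomp Require Import ring lra zify.
Import Order.TTheory GRing.Theory Num.Theory.
Local Open Scope ring_scope.
Set Implicit Arguments. Unset Strict Implicit. Unset Printing Implicit Defensive.


Lemma tr11 (R : realType) (M : 'M[R]_1) : M^T 0 0 = M 0 0.
Proof. by rewrite mxE. Qed.

Definition qf (R : realType) p (Y : 'M[R]_p) (u v : 'cV[R]_p) : R := (u^T *m Y *m v) 0 0.

Lemma qf_sym (R : realType) p (Y : 'M[R]_p) u v : Y^T = Y -> qf Y u v = qf Y v u.
Proof.
move=> sY; rewrite /qf -[LHS]tr11.
by rewrite !trmx_mul trmxK sY mulmxA.
Qed.

Lemma qfDl (R : realType) p (Y : 'M[R]_p) u w v : qf Y (u + w) v = qf Y u v + qf Y w v.
Proof. by rewrite /qf linearD /= !mulmxDl mxE. Qed.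
Lemma qfDr (R : realType) p (Y : 'M[R]_p) u w v : qf Y v (u + w) = qf Y v u + qf Y v w.
Proof. by rewrite /qf !mulmxDr mxE. Qed.
Lemma qfZl (R : realType) p (Y : 'M[R]_p) t u v : qf Y (t *: u) v = t * qf Y u v.
Proof. by rewrite /qf linearZ /= -!scalemxAl mxE. Qed.
Lemma qfZr (R : realType) p (Y : 'M[R]_p) t u v : qf Y v (t *: u) = t * qf Y v u.
Proof. by rewrite /qf -!scalemxAr mxE. Qed.

Lemma qf_expand (R : realType) p (Y : 'M[R]_p) (v e : 'cV_p) t : Y^T = Y ->
  qf Y (v + t *: e) (v + t *: e) = qf Y v v + 2 * t * qf Y e v + t^+2 * qf Y e e.
Proof.
move=> sY; rewrite qfDl !qfDr !qfZl !qfZr (qf_sym v e sY); lra.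
Qed.

Lemma psd_qf (R : realType) p (Y : 'M[R]_p) v : psd Y -> 0 <= qf Y v v.
Proof. by case=> _ /(_ v). Qed.

Lemma psd_zero_cross (R : realType) p (Y : 'M[R]_p) e v : psd Y -> qf Y e e = 0 -> qf Y e v = 0.
Proof.
move=> [sY pY] e0; apply/eqP/negPn/negP => b0.
have := pY (v + (- (qf Y v v + 1) / (2 * qf Y e v)) *: e).
rewrite -/(qf _ _ _) qf_expand // e0 mulr0 addr0.
have -> : 2 * (- (qf Y v v + 1) / (2 * qf Y e v)) * qf Y e v = - (qf Y v v + 1).
  by field; rewrite b0.
lra.
Qed.


Lemma qfMD (R : realType) p (Y Z : 'M[R]_p) u v : qf (Y + Z) u v = qf Y u v + qf Z u v.
Proof. by rewrite /qf mulmxDr mulmxDl mxE. Qed.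
Lemma qfMN (R : realType) p (Y : 'M[R]_p) u v : qf (- Y) u v = - qf Y u v.
Proof. by rewrite /qf mulmxN mulNmx mxE. Qed.
Lemma qfMZ (R : realType) p (Y : 'M[R]_p) c u v : qf (c *: Y) u v = c * qf Y u v.
Proof. by rewrite /qf -scalemxAr -scalemxAl mxE. Qed.

Lemma mul11 (R : realType) (a b : 'M[R]_1) : (a *m b) 0 0 = a 0 0 * b 0 0.
Proof. by rewrite mxE big_ord1. Qed.

Lemma qf_schur (R : realType) p (Y : 'M[R]_p) c e u v : Y^T = Y ->
  qf (Y - c *: (Y *m e *m (Y *m e)^T)) u v = qf Y u v - c * (qf Y e u * qf Y e v).
Proof.
move=> sY; rewrite qfMD qfMN qfMZ /qf.
rewrite !mulmxA -(mulmxA (u^T *m Y *m e)) mul11 trmx_mul sY.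
congr (_ - c * (_ * _)); exact: (qf_sym u e sY).
Qed.

Lemma qf_delta (R : realType) p (Y : 'M[R]_p) i j : qf Y (delta_mx i 0) (delta_mx j 0) = Y i j.
Proof. by rewrite /qf trmx_delta -rowE -colE !mxE. Qed.

Lemma tr11' (R : realType) (M : 'M[R]_1) : \tr M = M 0 0.
Proof. by rewrite /mxtrace big_ord1. Qed.

Lemma psd_schur (R : realType) p (Y : 'M[R]_p) e : psd Y -> 0 < qf Y e e ->
  psd (Y - (qf Y e e)^-1 *: (Y *m e *m (Y *m e)^T)).
Proof.
move=> [sY pY] q0; split.
  by rewrite linearB /= linearZ /= !trmx_mul !trmxK sY.
move=> v; rewrite -/(qf _ _ _) qf_schur //.
have := pY (v + (- (qf Y e v) / qf Y e e) *: e).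
rewrite -/(qf _ _ _) qf_expand //.
have -> : qf Y v v + 2 * (- qf Y e v / qf Y e e) * qf Y e v +
    (- qf Y e v / qf Y e e) ^+ 2 * qf Y e e =
  qf Y v v - (qf Y e e)^-1 * (qf Y e v * qf Y e v).
  by field; rewrite lt0r_neq0.
by [].
Qed.

Lemma tr_psd (R : realType) p (P Y : 'M[R]_p) : psd P -> psd Y -> 0 <= \tr (P *m Y).
Proof.
move=> pP.
suff H : forall k (Y : 'M[R]_p), psd Y -> (#|[set i | Y i i != 0%R]| <= k)%N ->
  0 <= \tr (P *m Y) by move=> pY; apply: (H _ _ pY (leqnn _)).
elim=> [|k IH] {}Y pY.
  rewrite leqn0 cards_eq0 => /eqP E.
  have -> : Y = 0.
    apply/matrixP => i j; rewrite mxE -qf_delta; apply: psd_zero_cross => //.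
    rewrite qf_delta; apply/eqP/negPn/negP => Hi.
    by have := in_set0 i; rewrite -E inE Hi.
  by rewrite mulmx0 linear0.
move=> Hc.
have [i Hi|none] := pickP (fun i => Y i i != 0); last first.
  have -> : Y = 0.
    apply/matrixP => i j; rewrite mxE -qf_delta; apply: psd_zero_cross => //.
    by rewrite qf_delta; apply/eqP/negPn/negP => Hi; rewrite none in Hi.
  by rewrite mulmx0 linear0.
set e := delta_mx i 0 : 'cV[R]_p.
have qe : qf Y e e = Y i i by rewrite qf_delta.
have q0 : 0 < qf Y e e by rewrite qe lt0r Hi /= -qe; apply: psd_qf.
set Y' := Y - (qf Y e e)^-1 *: (Y *m e *m (Y *m e)^T).
have pY' : psd Y' by apply: psd_schur.
have -> : Y = Y' + (qf Y e e)^-1 *: (Y *m e *m (Y *m e)^T) by rewrite subrK.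
rewrite mulmxDr mxtraceD -scalemxAr mxtraceZ.
apply: addr_ge0; last first.
  apply: mulr_ge0; first by rewrite invr_ge0 ltW.
  rewrite mulmxA mxtrace_mulC mulmxA tr11'; exact: psd_qf.
apply: IH => //.
have : [set j | Y' j j != 0] \proper [set j | Y j j != 0].
  apply/properP; split.
    apply/subsetP => j; rewrite !inE; apply: contra => /eqP Yj.
    rewrite -qf_delta /Y' qf_schur; last by case: pY.
    have Z : qf Y e (delta_mx j 0) = 0.
      rewrite qf_sym; last by case: pY.
      by apply: psd_zero_cross; rewrite // qf_delta.
    by rewrite Z mul0r mulr0 subr0 qf_delta Yj.
  exists i; first by rewrite inE.
  rewrite inE negbK -qf_delta /Y' qf_schur; last by case: pY.
  rewrite -/e mulrA mulVf ?mul1r ?subrr //; exact: lt0r_neq0.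
move/proper_card => H; rewrite -ltnS; exact: leq_trans H Hc.
Qed.


Lemma psd_add (R : realType) p (Y Z : 'M[R]_p) : psd Y -> psd Z -> psd (Y + Z).
Proof.
move=> [sY pY] [sZ pZ]; split; first by rewrite linearD /= sY sZ.
move=> v; rewrite -/(qf _ _ _) qfMD; apply: addr_ge0; [exact: pY|exact: pZ].
Qed.

Lemma psd_scale (R : realType) p (Y : 'M[R]_p) c : 0 <= c -> psd Y -> psd (c *: Y).
Proof.
move=> c0 [sY pY]; split; first by rewrite linearZ /= sY.
move=> v; rewrite -/(qf _ _ _) qfMZ; apply: mulr_ge0 => //; exact: pY.
Qed.

Lemma psd_congr (R : realType) p q (C : 'M[R]_(q, p)) (Y : 'M[R]_p) : psd Y -> psd (C *m Y *m C^T).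
Proof.
move=> [sY pY]; split; first by rewrite !trmx_mul trmxK sY mulmxA.
move=> v; have := pY (C^T *m v).
by rewrite trmx_mul trmxK !mulmxA.
Qed.

Lemma psd_rank1 (R : realType) p (z : 'cV[R]_p) : psd (z *m z^T).
Proof.
split; first by rewrite trmx_mul trmxK.
move=> v; rewrite mulmxA -(mulmxA (v^T *m z)) mul11.
have -> : (z^T *m v) 0 0 = (v^T *m z) 0 0.
  by rewrite -tr11 trmx_mul trmxK.
by rewrite -expr2 sqr_ge0.
Qed.

Lemma pd_add_psd (R : realType) p (Y Z : 'M[R]_p) : pd Y -> psd Z -> pd (Y + Z).
Proof.
move=> [sY pY] [sZ pZ]; split; first by rewrite linearD /= sY sZ.
move=> v v0; rewrite -/(qf _ _ _) qfMD; apply: ltr_wpDr; [exact: pZ|exact: pY].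
Qed.

Lemma pd_psd (R : realType) p (Y : 'M[R]_p) : pd Y -> psd Y.
Proof.
move=> [sY pY]; split=> // v; have [->|v0] := eqVneq v 0.
  by rewrite mulmx0 mxE.
exact: ltW (pY v v0).
Qed.

Lemma pd_unit (R : realType) p (Y : 'M[R]_p) : pd Y -> Y \in unitmx.
Proof.
move=> [sY pY]; rewrite unitmxE unitfE; apply/negP => /det0P [v v0 vP].
have u0 : v^T != 0 by rewrite trmx_eq0.
have := pY _ u0; rewrite trmxK vP mul0mx mxE ltxx //.
Qed.


Lemma ab (V : zmodType) (q r a t g : V) : q + r + (a + t) = (a - g + q) + (r + t + g).
Proof.
by rewrite (addrC (r + t) g) (addrA (a - g + q) g) (addrAC (a - g) q g) subrK addrACA (addrC q a).
Qed.

Lemma riccati_id (R : realType) n m (A : 'M[R]_n) (B : 'M[R]_(n,m)) (X Qp : 'M[R]_n)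
  (Rp : 'M[R]_m) (F : 'M[R]_(m,n)) :
  X^T = X -> Rp^T = Rp -> (Rp + B^T *m X *m B) \in unitmx ->
  Qp + F^T *m Rp *m F + (A + B *m F)^T *m X *m (A + B *m F) =
  (A^T *m X *m A - A^T *m X *m B *m invmx (Rp + B^T *m X *m B) *m B^T *m X *m A + Qp)
  + (F - - (invmx (Rp + B^T *m X *m B) *m B^T *m X *m A))^T *m (Rp + B^T *m X *m B)
    *m (F - - (invmx (Rp + B^T *m X *m B) *m B^T *m X *m A)).
Proof.
move=> sX sR.
have [P eP] : {P | P = Rp + B^T *m X *m B} by exists (Rp + B^T *m X *m B).
rewrite -eP => uP.
have sP : P^T = P by rewrite eP linearD /= !trmx_mul trmxK sX sR mulmxA.
have [Pi ePi] : {Pi | Pi = invmx P} by exists (invmx P).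
rewrite -ePi.
have sPi : Pi^T = Pi by rewrite ePi trmx_inv sP.
have PPi : P *m Pi = 1%:M by rewrite ePi mulmxV.
have PiP : Pi *m P = 1%:M by rewrite ePi mulVmx.
have [H eH] : {H | H = B^T *m X *m A} by exists (B^T *m X *m A).
have HT : H^T = A^T *m X *m B by rewrite eH !trmx_mul trmxK sX mulmxA.
set T := F^T *m H + H^T *m F + F^T *m (B^T *m X *m B) *m F.
have e1 : (F - - (Pi *m B^T *m X *m A))^T *m P *m (F - - (Pi *m B^T *m X *m A))
   = F^T *m Rp *m F + T + H^T *m Pi *m H.
  rewrite opprK -!(mulmxA Pi) -eH.
  rewrite [(F + Pi *m H)^T]linearD /= (trmx_mul Pi H) sPi.
  rewrite !mulmxDl !mulmxDr !mulmxA.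
  rewrite -(mulmxA F^T P Pi) PPi mulmx1.
  rewrite -(mulmxA H^T Pi P) PiP mulmx1.
  rewrite eP mulmxDr mulmxDl /T !mulmxA.
  rewrite !addrA; congr (_ + _); rewrite -!addrA; congr (_ + _).
  by rewrite addrC -addrA.
have e4 : (A + B *m F)^T *m X *m (A + B *m F) = A^T *m X *m A + T.
  rewrite [(A + B *m F)^T]linearD /= (trmx_mul B F) !mulmxDl !mulmxDr /T HT eH !mulmxA.
  by rewrite -addrA; congr (_ + _); rewrite addrCA addrA.
have e3 : A^T *m X *m B *m Pi *m B^T *m X *m A = H^T *m Pi *m H.
  by rewrite HT eH !mulmxA.
by rewrite e1 e4 e3; exact: ab.
Qed.

Lemma trcyc (R : realType) p q (M : 'M[R]_p) (C : 'M[R]_(p, q)) (Sig : 'M[R]_q) :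
  \tr (M *m (C *m Sig *m C^T)) = \tr ((C^T *m M *m C) *m Sig).
Proof. by rewrite !mulmxA mxtrace_mulC !mulmxA. Qed.

Lemma trcyc2 (R : realType) p q r (M : 'M[R]_p) (G : 'M[R]_(p, r)) (C : 'M[R]_(r, q)) (Sig : 'M[R]_q) :
  \tr (M *m (G *m (C *m Sig *m C^T) *m G^T)) = \tr (((G *m C)^T *m M *m (G *m C)) *m Sig).
Proof.
have -> : G *m (C *m Sig *m C^T) *m G^T = (G *m C) *m Sig *m (G *m C)^T by rewrite trmx_mul !mulmxA.
exact: trcyc.
Qed.

Lemma step_link (R : realType) n m (A : 'M[R]_n) (B : 'M[R]_(n,m)) (X Qp W Sig : 'M[R]_n)
  (Rp : 'M[R]_m) (F : 'M[R]_(m,n)) :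
  \tr (block_mx Qp 0 0 Rp *m (IF F *m Sig *m (IF F)^T))
  + \tr (X *m (row_mx A B *m (IF F *m Sig *m (IF F)^T) *m (row_mx A B)^T + W))
  = \tr ((Qp + F^T *m Rp *m F + (A + B *m F)^T *m X *m (A + B *m F)) *m Sig) + \tr (X *m W).
Proof.
have H := trcyc (block_mx Qp 0 0 Rp) (IF F) Sig.
have H2 := trcyc2 X (row_mx A B) (IF F) Sig.
rewrite mulmxDr mxtraceD H H2.
have GI : row_mx A B *m IF F = A + B *m F by rewrite /IF mul_row_col mulmx1.
have BI : (IF F)^T *m block_mx Qp 0 0 Rp *m IF F = Qp + F^T *m Rp *m F.
  rewrite /IF -mulmxA mul_block_col tr_col_mx mul_row_col trmx1.
  by rewrite !mul1mx !mulmx1 !mul0mx addr0 add0r mulmxA.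
by rewrite GI BI [in RHS]mulmxDl [in RHS]mxtraceD addrA.
Qed.

Theorem proposition7 (R : realType) (n m N : nat)
  (A : 'M[R]_n) (B : 'M[R]_(n, m)) (W V : 'M[R]_n) (z : 'cV[R]_n)
  (Qf Qtf : 'M[R]_n) (Q Qt : nat -> 'M[R]_n) (Rk Rt : nat -> 'M[R]_m)
  (gamma lam : R) :
  (0 < N)%N ->
  (* relaxed noise condition *)
  psd V -> psd W ->
  (* standing assumptions *)
  psd Qf -> psd Qtf ->
  (forall k, (k < N)%N -> psd (Q k) /\ psd (Qt k)) ->
  (forall k mu, (k < N)%N -> 0 < mu -> pd (Rk k + mu *: Rt k)) ->
  (exists S F, dynamics N A B W V z S F /\ cost N A B W Qtf Qt Rt S < gamma) ->
  gamma < cost N A B W Qtf Qt Rt (Slam N A B W V z Qf Qtf Q Qt Rk Rt 0) ->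
  (* f is a bijection (onto its image) on [0, +oo) *)
  (forall l1 l2, 0 <= l1 -> 0 <= l2 ->
     flam N A B W V z Qf Qtf Q Qt Rk Rt l1 gamma
     = flam N A B W V z Qf Qtf Q Qt Rk Rt l2 gamma -> l1 = l2) ->
  (* the tuple *)
  0 < lam ->
  cost N A B W Qtf Qt Rt (Slam N A B W V z Qf Qtf Q Qt Rk Rt lam) = gamma ->
  optimal N A B W V z Qf Qtf Q Qt Rk Rt gamma
    (Slam N A B W V z Qf Qtf Q Qt Rk Rt lam) (Flam N A B Qf Qtf Q Qt Rk Rt lam).
Proof.
move=> N0 pV pW pQf pQtf pQ pR _ _ _ lam0 Ceq.
pose Xl := Xlam N A B Qf Qtf Q Qt Rk Rt lam.
pose Fl := Flam N A B Qf Qtf Q Qt Rk Rt lam.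
pose Sl := Slam N A B W V z Qf Qtf Q Qt Rk Rt lam.
pose Qp := fun k => Q k + lam *: Qt k.
pose Rp := fun k => Rk k + lam *: Rt k.
pose G := row_mx A B.
have pRp : forall k, (k < N)%N -> pd (Rp k) by move=> k hk; exact: pR.
have pQp : forall k, (k < N)%N -> psd (Qp k).
  move=> k hk; case: (pQ k hk) => h1 h2; exact: psd_add h1 (psd_scale (ltW lam0) h2).
have Xunf : forall j, (j < N)%N -> Xl j =
    A^T *m Xl j.+1 *m A - A^T *m Xl j.+1 *m B *m invmx (Rp j + B^T *m Xl j.+1 *m B)
      *m B^T *m Xl j.+1 *m A + Qp j.
  move=> j hj; rewrite /Xl /Xlam -(subnSK hj) /= (subnSK hj) subKn ?(ltnW hj) //.
  by rewrite -addrA.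
have XN : Xl N = Qf + lam *: Qtf by rewrite /Xl /Xlam subnn.
have Xpsd : forall j, (j <= N)%N -> psd (Xl j).
  suff H : forall i, (i <= N)%N -> psd (Xl (N - i)%N).
    move=> j hj; rewrite -(subKn hj); apply: H; exact: leq_subr.
  elim=> [|i IH] hi.
    rewrite subn0 XN; exact: psd_add pQf (psd_scale (ltW lam0) pQtf).
  have hk : (N - i.+1 < N)%N by rewrite ltn_subrL N0.
  have e : (N - i.+1)%N.+1 = (N - i)%N by rewrite subnSK.
  have pX : psd (Xl (N - i.+1)%N.+1) by rewrite e; apply: IH; exact: ltnW.
  rewrite (Xunf _ hk).
  move: pX; set X := Xl (N - i.+1)%N.+1; set k := (N - i.+1)%N => pX.
  have pP : pd (Rp k + B^T *m X *m B).
    apply: pd_add_psd (pRp k hk) _; have := psd_congr B^T pX; by rewrite trmxK.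
  have E := @riccati_id _ _ _ A B X (Qp k) (Rp k) (- (invmx (Rp k + B^T *m X *m B) *m B^T *m X *m A))
     pX.1 (pRp k hk).1 (pd_unit pP).
  rewrite subrr trmx0 !mul0mx addr0 in E.
  rewrite -E; apply: psd_add; first apply: psd_add.
  - exact: pQp.
  - have := psd_congr (- (invmx (Rp k + B^T *m X *m B) *m B^T *m X *m A))^T (pd_psd (pRp k hk)).
    by rewrite trmxK.
  - have := psd_congr (A + B *m - (invmx (Rp k + B^T *m X *m B) *m B^T *m X *m A))^T pX.
    by rewrite trmxK.
have PP : forall j, (j < N)%N -> pd (Rp j + B^T *m Xl j.+1 *m B).
  move=> j hj; apply: pd_add_psd (pRp j hj) _.
  by have := psd_congr B^T (Xpsd j.+1 hj); rewrite trmxK.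
pose Sig (S : nat -> 'M[R]_(n + m)) (j : nat) : 'M[R]_n :=
  if j is j'.+1 then G *m S j' *m G^T + W else V + z *m z^T.
have Sform : forall S F, dynamics N A B W V z S F -> forall j, (j < N)%N ->
    S j = IF (F j) *m Sig S j *m (IF (F j))^T.
  move=> S F [D0 Dk] [|j] hj; first by rewrite D0.
  rewrite Dk //; apply/andP; split => //; rewrite -ltnS prednK //.
have Sigpsd : forall S F, dynamics N A B W V z S F -> forall j, (j < N)%N -> psd (Sig S j).
  move=> S F D; elim=> [|j IH] hj /=; first exact: psd_add pV (psd_rank1 z).
  apply: psd_add pW; rewrite (Sform S F D j (ltnW hj)).
  exact: psd_congr (psd_congr _ (IH (ltnW hj))).
pose Kf (j : nat) := - (invmx (Rp j + B^T *m Xl j.+1 *m B) *m B^T *m Xl j.+1 *m A).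
pose delta (S : nat -> 'M[R]_(n + m)) (F : nat -> 'M[R]_(m, n)) (j : nat) :=
  \tr ((F j - Kf j)^T *m (Rp j + B^T *m Xl j.+1 *m B) *m (F j - Kf j) *m Sig S j).
have Sum : forall S F, dynamics N A B W V z S F -> forall j, (j <= N)%N ->
    \sum_(k < j) \tr (block_mx (Qp k) 0 0 (Rp k) *m S k) + \tr (Xl j *m Sig S j)
    = \tr (Xl 0%N *m Sig S 0%N) + \sum_(k < j) (\tr (Xl k.+1 *m W) + delta S F k).
  move=> S F D; elim=> [|j IH] hj; first by rewrite !big_ord0 add0r addr0.
  rewrite !big_ord_recr /= [in RHS]addrA -(IH (ltnW hj)) -addrA (Sform S F D j hj) step_link.
  have E := @riccati_id _ _ _ A B (Xl j.+1) (Qp j) (Rp j) (F j)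
     (Xpsd j.+1 hj).1 (pRp j hj).1 (pd_unit (PP j hj)).
  rewrite -(Xunf j hj) in E.
  rewrite E mulmxDl mxtraceD /delta /Kf.
  lra.
have Cost' : forall S F, dynamics N A B W V z S F ->
    cost N A B W (Qf + lam *: Qtf) Qp Rp S
    = \tr (Xl 0%N *m Sig S 0%N) + \sum_(k < N) (\tr (Xl k.+1 *m W) + delta S F k).
  move=> S F D; rewrite -(Sum S F D N (leqnn N)) /cost XN addrC.
  have -> : Sig S N = G *m S N.-1 *m G^T + W by rewrite -{1}(prednK N0).
  by [].
have Clin : forall S, cost N A B W Qf Q Rk S + lam * cost N A B W Qtf Qt Rt S
    = cost N A B W (Qf + lam *: Qtf) Qp Rp S.
  move=> S; rewrite /cost mulmxDl -scalemxAl mxtraceD mxtraceZ.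
  have -> : \sum_(k < N) \tr (block_mx (Qp k) 0 0 (Rp k) *m S k)
     = \sum_(k < N) \tr (block_mx (Q k) 0 0 (Rk k) *m S k)
       + lam * \sum_(k < N) \tr (block_mx (Qt k) 0 0 (Rt k) *m S k).
    rewrite mulr_sumr -big_split /=; apply: eq_bigr => k _.
    rewrite -mxtraceZ -mxtraceD scalemxAl -mulmxDl scale_block_mx add_block_mx.
    by rewrite !scaler0 !addr0.
  lra.
have Dl : dynamics N A B W V z Sl Fl by split => // [[|k]].
split; first by split=> //; rewrite Ceq.
move=> S' F' [D' C'].
have H1 := Cost' Sl Fl Dl; have H2 := Cost' S' F' D'.
have Hle : cost N A B W (Qf + lam *: Qtf) Qp Rp Sl <= cost N A B W (Qf + lam *: Qtf) Qp Rp S'.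
  rewrite H1 H2 lerD2l; apply: ler_sum => k _; apply: lerD => //.
  have -> : delta Sl Fl k = 0.
    rewrite /delta; have -> : Fl k - Kf k = 0 by exact: subrr.
    by rewrite trmx0 !mul0mx linear0.
  rewrite /delta; set D := F' k - Kf k.
  have kN := ltn_ord k.
  have -> : \tr (D^T *m (Rp k + B^T *m Xl k.+1 *m B) *m D *m Sig S' k)
     = \tr ((Rp k + B^T *m Xl k.+1 *m B) *m (D *m Sig S' k *m D^T)).
    by rewrite [in RHS]mulmxA [in RHS]mulmxA [in RHS]mxtrace_mulC !mulmxA.
  apply: tr_psd; first exact: pd_psd (PP k kN).
  exact: psd_congr (Sigpsd S' F' D' k kN).
rewrite -!Clin in Hle.
have : lam * cost N A B W Qtf Qt Rt S' <= lam * gamma by rewrite ler_wpM2l // ltW.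
rewrite Ceq in Hle; lra.
Qed.
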